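(* Let $\mathbf{x}_1,\dots,\mathbf{x}_n\in\mathbb{R}^p$ be observations with labels $y_i\in\{-1,1\}$, let $I_+=\{i: y_i=1\}$, $I_-=\{i:y_i=-1\}$, $n_+=|I_+|$, $n_-=|I_-|$, let $\lambda>0$, and let $\mathbf{K}\in\mathbb{R}^{n\times n}$ be the kernel matrix with entries $\mathbf{K}_{lm}=K(\mathbf{x}_l,\mathbf{x}_m)$ for a positive definite kernel $K$, with $\mathbf{k}_i$ denoting the $i$th column of $\mathbf{K}$. Suppose $\mathbf{K}=\mathbf{V}\mathbf{V}^\top$ for a real matrix $\mathbf{V}$, and let $\mathbf{v}_i$ denote the $i$th row of $\mathbf{V}$. Then the kernel ROC-SVM problem $$\min_{\boldsymbol{\theta}\in\mathbb{R}^n}\ \frac{1}{n_+n_-}\sum_{i\in I_+}\sum_{j\in I_-}\big[1-\boldsymbol{\theta}^\top(\mathbf{k}_i-\mathbf{k}_j)\big]_+ +\frac{\lambda}{2}\boldsymbol{\theta}^\top\mathbf{K}\boldsymbol{\theta}$$ is equivalent to solving the linear ROC-SVM problem $$\min_{\boldsymbol{\beta}}\ \frac{1}{n_+n_-}\sum_{i\in I_+}\sum_{j\in I_-}\big[1-\boldsymbol{\beta}^\top(\mathbf{v}_i-\mathbf{v}_j)\big]_+ +\frac{\lambda}{2}\boldsymbol{\beta}^\top\boldsymbol{\beta}.$$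
   Context: $[z]_+=\max\{z,0\}$. The first problem arises from the ROC-SVM $\min_{f\in\mathcal{H}_K}\frac{1}{n_+n_-}\sum_{i\in I_+}\sum_{j\in I_-}[1-\{f(\mathbf{x}_i)-f(\mathbf{x}_j)\}]_++\frac{\lambda}{2}\|f\|^2_{\mathcal{H}_K}$ by writing $f(\mathbf{x})=\alpha+\sum_{k=1}^n\theta_kK(\mathbf{x},\mathbf{x}_k)$, where $\mathcal{H}_K$ is the reproducing kernel Hilbert space of $K$ (the intercept $\alpha$ cancels in differences). *)

(* Defs.v *)
From HB Require Import structures.
From mathcomp Require Import all_boot all_order all_algebra.
From mathcomp Require Import reals.
Set Implicit Arguments. Unset Strict Implicit. Unset Printing Implicit Defensive.
Import Order.TTheory GRing.Theory Num.Theory.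
Local Open Scope ring_scope.

Section Defs.
Variable R : realType.

Definition pospart (z : R) : R := Num.max z 0.

Definition Ipos n (y : 'I_n -> R) : {set 'I_n} := [set i | y i == 1].
Definition Ineg n (y : 'I_n -> R) : {set 'I_n} := [set i | y i == -1].

Definition pd_kernel p (K : 'rV[R]_p -> 'rV[R]_p -> R) : Prop :=
  (forall a b, K a b = K b a) /\
  (forall m (z : 'I_m -> 'rV[R]_p) (c : 'I_m -> R),
      0 <= \sum_(l < m) \sum_(k < m) c l * c k * K (z l) (z k)).

Definition kernel_matrix p n (K : 'rV[R]_p -> 'rV[R]_p -> R) (x : 'I_n -> 'rV[R]_p)
  : 'M[R]_n := \matrix_(l, m) K (x l) (x m).

Definition kernel_rocsvm_obj n (lam : R) (y : 'I_n -> R) (Km : 'M[R]_n)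
  (theta : 'cV[R]_n) : R :=
  (#|Ipos y| * #|Ineg y|)%:R^-1 *
    \sum_(i in Ipos y) \sum_(j in Ineg y)
       pospart (1 - (theta^T *m (col i Km - col j Km)) 0 0)
  + lam / 2 * (theta^T *m Km *m theta) 0 0.

Definition linear_rocsvm_obj n r (lam : R) (y : 'I_n -> R) (V : 'M[R]_(n, r))
  (beta : 'cV[R]_r) : R :=
  (#|Ipos y| * #|Ineg y|)%:R^-1 *
    \sum_(i in Ipos y) \sum_(j in Ineg y)
       pospart (1 - (beta^T *m (row i V - row j V)^T) 0 0)
  + lam / 2 * (beta^T *m beta) 0 0.

Definition is_minimizer (T : Type) (f : T -> R) (t : T) : Prop :=
  forall t', f t <= f t'.

End Defs.

(* Main.v *)
Require Import Defs.
From HB Require Import structures.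
From mathcomp Require Import all_boot all_order all_algebra.
From mathcomp Require Import reals.
From mathcomp Require Import zify ring lra.
Import Order.TTheory GRing.Theory Num.Theory.
Local Open Scope ring_scope.

Lemma sq_rv (R : realType) r (z : 'rV[R]_r) :
  (z *m z^T) 0 0 = \sum_j z 0 j ^+ 2.
Proof. rewrite !mxE; apply: eq_bigr => j _; by rewrite !mxE expr2. Qed.

Lemma sq_rv0 (R : realType) r (z : 'rV[R]_r) :
  (z *m z^T) 0 0 = 0 -> z = 0.
Proof.
rewrite sq_rv => /psumr_eq0P H; apply/rowP => j; rewrite mxE.
have := H (fun k _ => sqr_ge0 (z 0 k)) j isT.
by move/eqP; rewrite sqrf_eq0 => /eqP.
Qed.

Lemma col_mulmx (R : realType) m n k (A : 'M[R]_(m, n)) (B : 'M[R]_(n, k)) i :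
  col i (A *m B) = A *m col i B.
Proof. apply/colP => l; rewrite !mxE; apply: eq_bigr => t _; by rewrite !mxE. Qed.

Lemma decomp (R : realType) n r (V : 'M[R]_(n, r)) (beta : 'cV[R]_r) :
  exists (u : 'cV[R]_n) (w : 'cV[R]_r), beta = V^T *m u + w /\ V *m w = 0.
Proof.
have cap0 : (V :&: kermx V^T)%MS == 0.
  apply/rowV0P => v; rewrite sub_capmx => /andP[/submxP[D ->] /sub_kermxP H].
  apply: sq_rv0.
  by rewrite trmx_mul mulmxA H mul0mx mxE.
have full : row_full (V + kermx V^T)%MS.
  rewrite /row_full; apply/eqP.
  have := mxrank_sum_cap V (kermx V^T).
  rewrite mxrank_ker mxrank_tr.
  move: cap0; rewrite -mxrank_eq0 => /eqP ->.
  have := rank_leq_col V. lia.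
have /sub_addsmxP [[u1 u2] /= E] := submx_full beta^T full.
exists u1^T, (u2 *m kermx V^T)^T; split.
  by rewrite -trmx_mul -linearD /= -E trmxK.
apply: trmx_inj; rewrite trmx_mul trmxK -mulmxA mulmx_ker mulmx0 trmx0 //.
Qed.

Lemma lin_split (R : realType) n r (lam : R) (y : 'I_n -> R) (V : 'M[R]_(n, r))
  (u : 'cV[R]_n) (w : 'cV[R]_r) : V *m w = 0 ->
  linear_rocsvm_obj lam y V (V^T *m u + w)
  = linear_rocsvm_obj lam y V (V^T *m u) + lam / 2 * (w^T *m w) 0 0.
Proof.
move=> Vw.
rewrite /linear_rocsvm_obj -addrA; congr (_ * _ + _).
  apply: eq_bigr => i _; apply: eq_bigr => j _.
  have h : w^T *m (row i V - row j V)^T = 0.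
    by rewrite -trmx_mul mulmxBl -!row_mul Vw !row0 subrr trmx0.
  by rewrite linearD /= mulmxDl h addr0.
rewrite -mulrDr; congr (_ * _).
rewrite mulmxDr (linearD trmx) /= !mulmxDl.
have h1 : (V^T *m u)^T *m w = 0 by rewrite trmx_mul trmxK -mulmxA Vw mulmx0.
have h2 : w^T *m (V^T *m u) = 0 by rewrite mulmxA -trmx_mul Vw trmx0 mul0mx.
by rewrite h1 h2 addr0 add0r !mxE.
Qed.

Theorem proposition1 (R : realType) (n p r : nat)
  (x : 'I_n -> 'rV[R]_p) (y : 'I_n -> R) (lam : R)
  (K : 'rV[R]_p -> 'rV[R]_p -> R) (V : 'M[R]_(n, r)) :
  (forall i, y i = 1 \/ y i = -1) ->
  0 < lam ->
  pd_kernel K ->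
  kernel_matrix K x = V *m V^T ->
  (* the substitution beta = V^T theta transforms one objective into the other *)
  (forall theta : 'cV[R]_n,
     kernel_rocsvm_obj lam y (kernel_matrix K x) theta
     = linear_rocsvm_obj lam y V (V^T *m theta)) /\
  (* theta solves the kernel problem iff V^T theta solves the linear problem *)
  (forall theta : 'cV[R]_n,
     is_minimizer (kernel_rocsvm_obj lam y (kernel_matrix K x)) theta <->
     is_minimizer (linear_rocsvm_obj lam y V) (V^T *m theta)) /\
  (* every solution of the linear problem arises this way *)
  (forall beta : 'cV[R]_r,
     is_minimizer (linear_rocsvm_obj lam y V) beta ->
     exists theta : 'cV[R]_n, V^T *m theta = beta).
Proof.
move=> _ lam0 _ KV.
have eqobj : forall theta : 'cV[R]_n,
     kernel_rocsvm_obj lam y (kernel_matrix K x) theta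
     = linear_rocsvm_obj lam y V (V^T *m theta).
  move=> theta; rewrite /linear_rocsvm_obj /kernel_rocsvm_obj KV trmx_mul trmxK.
  congr (_ * _ + _ * _).
    apply: eq_bigr => i _; apply: eq_bigr => j _.
    by rewrite !col_mulmx -!tr_row -mulmxBr -linearB /= mulmxA.
  by rewrite !mulmxA.
have wge : forall w : 'cV[R]_r, 0 <= lam / 2 * (w^T *m w) 0 0.
  move=> w; apply: mulr_ge0; first by apply: divr_ge0; [exact: ltW|].
  have -> : (w^T *m w) 0 0 = (w^T *m w^T^T) 0 0 by rewrite trmxK.
  rewrite sq_rv; apply: sumr_ge0 => j _; exact: sqr_ge0.
split; first exact: eqobj.
split.
  move=> theta; split.
    move=> Hm beta; have [u [w [-> Vw]]] := @decomp R n r V beta.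
    rewrite lin_split // -eqobj -eqobj; apply: ler_wpDr; [exact: wge | exact: Hm].
  by move=> Hm theta'; rewrite !eqobj; exact: Hm.
move=> beta Hm; have [u [w [E Vw]]] := @decomp R n r V beta.
exists u; rewrite E.
have := Hm (V^T *m u); rewrite E lin_split // => H.
have : lam / 2 * (w^T *m w) 0 0 = 0.
  apply/eqP; rewrite eq_le wge andbT; lra.
move/eqP; rewrite mulf_eq0 => /orP [|/eqP Hw].
  by move=> /eqP h; exfalso; lra.
have : w^T = 0 by apply: sq_rv0; rewrite trmxK.
by move/(congr1 trmx); rewrite trmxK trmx0 => ->; rewrite addr0.
Qed.
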